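(* Let $\Gamma=\{f_1,f_2,f_3\}$ be a smooth solution on $(0,T)\times I$ of $\partial_tf_i=-\nabla_s^2\vec\kappa_i-\tfrac12|\vec\kappa_i|^2\vec\kappa_i+\lambda_i\vec\kappa_i+\varphi_i\partial_sf_i$ with $\vec\kappa_i(t,0)=0$, and with initial data satisfying $f_1(0,0)=f_2(0,0)=f_3(0,0)$. Then $f_1(t,0)=f_2(t,0)=f_3(t,0)$ for all $t$ if and only if $\partial_tf_i(t,0)=\partial_tf_j(t,0)$ for all $t$ and all $i,j$. In that case, writing $A_i=\nabla_s^2\vec\kappa_i(t,0)$, $T_i=\partial_sf_i(t,0)$, $T_{ij}=\langle T_i,T_j\rangle$ and $\varphi_i=\varphi_i(t,0)$, the vector $(\varphi_1,\varphi_2,\varphi_3)$ solves $$M\begin{pmatrix}\varphi_1\\\varphi_2\\\varphi_3\end{pmatrix}=\begin{pmatrix}-\langle A_2+A_3,T_1\rangle\\-\langle A_1+A_3,T_2\rangle\\-\langle A_1+A_2,T_3\rangle\end{pmatrix},\qquad M=\begin{pmatrix}2&-T_{12}&-T_{13}\\-T_{12}&2&-T_{23}\\-T_{13}&-T_{23}&2\end{pmatrix}.$$ Moreover, for any unit vectors $T_1,T_2,T_3\in\mathbb{R}^n$, $\det M=8-2(T_{12}^2+T_{23}^2+T_{13}^2)-2T_{12}T_{23}T_{13}\ge2(1-T_{12}T_{23}T_{13})\ge0$, with $\det M=0$ if and only if $T_1=T_2=T_3$ or $T_i=T_{i+1}$ and $T_{i+2}=-T_i$ for some $i$ (indices mod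 3); in particular $M$ is positive definite whenever $\dim\operatorname{span}\{T_1,T_2,T_3\}\ge2$.
   Context: $I=[0,1]$; $ds=|\partial_xf_i|dx$, $\partial_s=|\partial_xf_i|^{-1}\partial_x$, $\vec\kappa_i=\partial_s^2f_i$, $\nabla_s\phi=\partial_s\phi-\langle\partial_s\phi,\partial_sf_i\rangle\partial_sf_i$; $\lambda_i$ constants, $\varphi_i$ smooth scalar functions. *)

(* Defs.v *)
From Stdlib Require Import Reals Lra Lia Arith ClassicalEpsilon.
Open Scope R_scope.

(* Vectors of R^n are represented as nat -> R; only components k < n matter. *)
Definition vec := nat -> R.

Fixpoint sumR (m : nat) (F : nat -> R) : R :=
  match m with O => 0 | S p => sumR p F + F p end.

Definition inner (n : nat) (u v : vec) : R := sumR n (fun k => u k * v k).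

Definition veq (n : nat) (u v : vec) : Prop := forall k, (k < n)%nat -> u k = v k.

Definition Iset (x : R) : Prop := 0 <= x <= 1.

(* derivative of h at x relative to the set D (one-sided at endpoints of I) *)
Definition has_deriv_within (D : R -> Prop) (h : R -> R) (x l : R) : Prop :=
  limit1_in (fun y => (h y - h x) / (y - x)) (fun y => D y /\ y <> x) l x.

Definition dt (g : R -> R -> R) (t x : R) : R :=
  epsilon (inhabits 0) (fun l => derivable_pt_lim (fun s => g s x) t l).
Definition dx (g : R -> R -> R) (t x : R) : R :=
  epsilon (inhabits 0) (fun l => has_deriv_within Iset (fun y => g t y) x l).

Fixpoint pd (w : list bool) (g : R -> R -> R) : R -> R -> R :=
  match w with
  | nil => g
  | cons b w' => if b then dt (pd w' g) else dx (pd w' g)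
  end.

Definition cont_on (D : R -> R -> Prop) (h : R -> R -> R) : Prop :=
  forall t x, D t x -> forall eps, eps > 0 ->
    exists del, del > 0 /\
      forall t' x', D t' x' -> Rabs (t' - t) < del -> Rabs (x' - x) < del ->
        Rabs (h t' x' - h t x) < eps.

Definition smooth_on (T : R) (g : R -> R -> R) : Prop :=
  forall w : list bool,
    cont_on (fun t x => 0 < t < T /\ Iset x) (pd w g) /\
    forall t x, 0 < t < T -> Iset x ->
      derivable_pt_lim (fun s => pd w g s x) t (pd (true :: w) g t x) /\
      has_deriv_within Iset (fun y => pd w g t y) x (pd (false :: w) g t x).

Definition vcomp (f : R -> R -> vec) (k : nat) : R -> R -> R := fun t x => f t x k.
Definition dtv (f : R -> R -> vec) (t x : R) : vec := fun k => dt (vcomp f k) t x.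
Definition dxv (f : R -> R -> vec) (t x : R) : vec := fun k => dx (vcomp f k) t x.

Definition speed (n : nat) (f : R -> R -> vec) (t x : R) : R :=
  sqrt (inner n (dxv f t x) (dxv f t x)).

Definition dsv (n : nat) (f : R -> R -> vec) (phi : R -> R -> vec) (t x : R) : vec :=
  fun k => dx (vcomp phi k) t x / speed n f t x.

Definition tangent (n : nat) (f : R -> R -> vec) : R -> R -> vec := dsv n f f.
Definition kappa (n : nat) (f : R -> R -> vec) : R -> R -> vec :=
  dsv n f (tangent n f).

Definition nablas (n : nat) (f : R -> R -> vec) (phi : R -> R -> vec) : R -> R -> vec :=
  fun t x k => dsv n f phi t x k
               - inner n (dsv n f phi t x) (tangent n f t x) * tangent n f t x k.

(* 3x3 matrices as nat -> nat -> R (indices 0,1,2) *)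
Definition det3 (m : nat -> nat -> R) : R :=
  let a i j := m i j in
  a 0%nat 0%nat * (a 1%nat 1%nat * a 2%nat 2%nat - a 1%nat 2%nat * a 2%nat 1%nat)
  - a 0%nat 1%nat * (a 1%nat 0%nat * a 2%nat 2%nat - a 1%nat 2%nat * a 2%nat 0%nat)
  + a 0%nat 2%nat * (a 1%nat 0%nat * a 2%nat 1%nat - a 1%nat 1%nat * a 2%nat 0%nat).

Definition posdef3 (m : nat -> nat -> R) : Prop :=
  forall v : nat -> R, (v 0%nat <> 0 \/ v 1%nat <> 0 \/ v 2%nat <> 0) ->
    0 < sumR 3 (fun i => sumR 3 (fun j => v i * m i j * v j)).

(* the matrix M built from T_0, T_1, T_2 (paper's T_1, T_2, T_3) *)
Definition Mmat (n : nat) (Tv : nat -> vec) (i j : nat) : R :=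
  if Nat.eqb i j then 2 else - inner n (Tv i) (Tv j).

Definition in_span3 (n : nat) (Tv : nat -> vec) (u : vec) : Prop :=
  exists c : nat -> R, veq n u (fun k => sumR 3 (fun i => c i * Tv i k)).

Definition lin_indep2 (n : nat) (u v : vec) : Prop :=
  forall a b, veq n (fun k => a * u k + b * v k) (fun _ => 0) -> a = 0 /\ b = 0.

Definition span_dim_ge2 (n : nat) (Tv : nat -> vec) : Prop :=
  exists u v, in_span3 n Tv u /\ in_span3 n Tv v /\ lin_indep2 n u v.

(* Main.v *)
Require Import Defs.
From Stdlib Require Import Reals Lra Lia Arith ClassicalEpsilon.
Open Scope R_scope.


Lemma sumR_ext n F G : (forall k, (k < n)%nat -> F k = G k) -> sumR n F = sumR n G.
Proof. induction n; intros H; simpl; auto. rewrite IHn by (intros; apply H; lia). rewrite H by lia. auto. Qed.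

Lemma sumR_lin3 n c1 c2 c3 F1 F2 F3 :
  sumR n (fun k => c1 * F1 k + c2 * F2 k + c3 * F3 k) = c1 * sumR n F1 + c2 * sumR n F2 + c3 * sumR n F3.
Proof. induction n; simpl; [ring|]. rewrite IHn. ring. Qed.

Lemma sumR_lin6 n c1 c2 c3 c4 c5 c6 F1 F2 F3 F4 F5 F6 :
  sumR n (fun k => c1 * F1 k + c2 * F2 k + c3 * F3 k + c4 * F4 k + c5 * F5 k + c6 * F6 k)
  = c1 * sumR n F1 + c2 * sumR n F2 + c3 * sumR n F3 + c4 * sumR n F4 + c5 * sumR n F5 + c6 * sumR n F6.
Proof. induction n; simpl; [ring|]. rewrite IHn. ring. Qed.

Lemma sumR_nonneg n F : (forall k, (k < n)%nat -> 0 <= F k) -> 0 <= sumR n F.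
Proof. induction n; intros H; simpl; [lra|]. assert (0 <= F n) by (apply H; lia).
  assert (0 <= sumR n F) by (apply IHn; intros; apply H; lia). lra. Qed.

Lemma sumR_zero n F : (forall k, (k < n)%nat -> 0 <= F k) -> sumR n F = 0 ->
  forall k, (k < n)%nat -> F k = 0.
Proof. induction n; intros H S k Hk; [lia|]. simpl in S.
  assert (0 <= F n) by (apply H; lia).
  assert (0 <= sumR n F) by (apply sumR_nonneg; intros; apply H; lia).
  destruct (Nat.eq_dec k n) as [->|]; [lra|]. apply IHn; try lra; try lia. intros; apply H; lia. Qed.

Lemma inner_sym n u v : inner n u v = inner n v u.
Proof. unfold inner. apply sumR_ext. intros; ring. Qed.

Lemma inner_veq_l n u u' v : veq n u u' -> inner n u v = inner n u' v.
Proof. intros H. unfold inner. apply sumR_ext. intros k Hk. rewrite H; auto. Qed.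
Lemma inner_veq_r n u v v' : veq n v v' -> inner n u v = inner n u v'.
Proof. intros H. unfold inner. apply sumR_ext. intros k Hk. rewrite H; auto. Qed.
Lemma inner_neg_r n u v : inner n u (fun k => - v k) = - inner n u v.
Proof. unfold inner. induction n; simpl; [ring|]. rewrite IHn. ring. Qed.

Lemma inner_comb n a b u v :
  inner n (fun k => a * u k + b * v k) (fun k => a * u k + b * v k)
  = a*a * inner n u u + 2*a*b * inner n u v + b*b * inner n v v.
Proof. unfold inner. rewrite <- sumR_lin3. apply sumR_ext. intros; ring. Qed.

Lemma inner_self_nonneg n u : 0 <= inner n u u.
Proof. apply sumR_nonneg. intros. nra. Qed.

Lemma inner_self_zero n u : inner n u u = 0 -> forall k, (k < n)%nat -> u k = 0.
Proof. intros H k Hk. assert (u k * u k = 0).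
  { apply (sumR_zero n (fun k => u k * u k)); auto. intros; nra. }
  nra. Qed.

Lemma unit_bound n u v : inner n u u = 1 -> inner n v v = 1 -> -1 <= inner n u v <= 1.
Proof. intros Hu Hv.
  pose proof (inner_self_nonneg n (fun k => 1 * u k + (-1) * v k)).
  pose proof (inner_self_nonneg n (fun k => 1 * u k + 1 * v k)).
  rewrite inner_comb in *. lra. Qed.

Lemma unit_eq1 n u v : inner n u u = 1 -> inner n v v = 1 -> inner n u v = 1 -> veq n u v.
Proof. intros Hu Hv H k Hk.
  assert (E : inner n (fun k => 1 * u k + (-1) * v k) (fun k => 1 * u k + (-1) * v k) = 0)
    by (rewrite inner_comb; lra).
  pose proof (inner_self_zero _ _ E k Hk). simpl in H0. lra. Qed.

Lemma unit_eqm1 n u v : inner n u u = 1 -> inner n v v = 1 -> inner n u v = -1 ->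
  veq n v (fun k => - u k).
Proof. intros Hu Hv H k Hk.
  assert (E : inner n (fun k => 1 * u k + 1 * v k) (fun k => 1 * u k + 1 * v k) = 0)
    by (rewrite inner_comb; lra).
  pose proof (inner_self_zero _ _ E k Hk). simpl in H0. lra. Qed.

Lemma nonzero_unit n c T : c <> 0 -> (forall k, (k < n)%nat -> c * T k = 0) ->
  inner n T T = 1 -> False.
Proof. intros Hc H HT. assert (inner n T T = 0).
  { unfold inner. transitivity (sumR n (fun _ => 0)).
    - apply sumR_ext. intros k Hk. specialize (H k Hk).
      assert (T k = 0). { apply (Rmult_eq_reg_l c); auto. lra. } rewrite H0; ring.
    - clear. induction n; simpl; lra. }
  lra. Qed.

Lemma span_collinear n Tv w (mu : nat -> R) :
  (forall j k, (j < 3)%nat -> (k < n)%nat -> Tv j k = mu j * w k) ->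
  span_dim_ge2 n Tv -> False.
Proof. intros H [u [v [[cu Hu] [[cv Hv] Hind]]]].
  set (al := cu 0%nat * mu 0%nat + cu 1%nat * mu 1%nat + cu 2%nat * mu 2%nat).
  set (be := cv 0%nat * mu 0%nat + cv 1%nat * mu 1%nat + cv 2%nat * mu 2%nat).
  assert (Eu : forall k, (k < n)%nat -> u k = al * w k).
  { intros k Hk. rewrite Hu by auto. simpl. rewrite !H by lia. unfold al. ring. }
  assert (Ev : forall k, (k < n)%nat -> v k = be * w k).
  { intros k Hk. rewrite Hv by auto. simpl. rewrite !H by lia. unfold be. ring. }
  destruct (Hind be (- al)) as [Hb Ha].
  { intros k Hk. rewrite Eu, Ev by auto. ring. }
  destruct (Hind 1 0) as [H1 _].
  { intros k Hk. rewrite Eu by auto. assert (al = 0) by lra. rewrite H0. ring. }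
  lra. Qed.

Lemma sq3_zero x y z : x^2 + y^2 + z^2 = 0 -> x = 0 /\ y = 0.
Proof. intros H. pose proof (pow2_ge_0 x). pose proof (pow2_ge_0 y). pose proof (pow2_ge_0 z).
  assert (x^2 = 0) by lra. assert (y^2 = 0) by lra. split; nra. Qed.

Lemma part2 : forall (n : nat) (Tv : nat -> vec),
     (forall i, (i < 3)%nat -> inner n (Tv i) (Tv i) = 1) ->
     det3 (Mmat n Tv) =
       8 - 2 * ((inner n (Tv 0%nat) (Tv 1%nat)) ^ 2 + (inner n (Tv 1%nat) (Tv 2%nat)) ^ 2
                + (inner n (Tv 0%nat) (Tv 2%nat)) ^ 2)
         - 2 * inner n (Tv 0%nat) (Tv 1%nat) * inner n (Tv 1%nat) (Tv 2%nat)
             * inner n (Tv 0%nat) (Tv 2%nat) /\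
     det3 (Mmat n Tv) >=
       2 * (1 - inner n (Tv 0%nat) (Tv 1%nat) * inner n (Tv 1%nat) (Tv 2%nat)
                  * inner n (Tv 0%nat) (Tv 2%nat)) /\
     2 * (1 - inner n (Tv 0%nat) (Tv 1%nat) * inner n (Tv 1%nat) (Tv 2%nat)
                * inner n (Tv 0%nat) (Tv 2%nat)) >= 0 /\
     (det3 (Mmat n Tv) = 0 <->
        ((veq n (Tv 0%nat) (Tv 1%nat) /\ veq n (Tv 1%nat) (Tv 2%nat)) \/
         exists i, (i < 3)%nat /\ veq n (Tv i) (Tv ((i + 1) mod 3)%nat) /\
                   veq n (Tv ((i + 2) mod 3)%nat) (fun k => - Tv i k))) /\
     (span_dim_ge2 n Tv -> posdef3 (Mmat n Tv)).
Proof.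
  intros n Tv HU.
  pose proof (HU 0%nat ltac:(lia)) as U0.
  pose proof (HU 1%nat ltac:(lia)) as U1.
  pose proof (HU 2%nat ltac:(lia)) as U2.
  assert (Edet : det3 (Mmat n Tv) =
       8 - 2 * ((inner n (Tv 0%nat) (Tv 1%nat)) ^ 2 + (inner n (Tv 1%nat) (Tv 2%nat)) ^ 2
                + (inner n (Tv 0%nat) (Tv 2%nat)) ^ 2)
         - 2 * inner n (Tv 0%nat) (Tv 1%nat) * inner n (Tv 1%nat) (Tv 2%nat)
             * inner n (Tv 0%nat) (Tv 2%nat)).
  { unfold det3, Mmat; simpl.
    rewrite (inner_sym n (Tv 1%nat) (Tv 0%nat)), (inner_sym n (Tv 2%nat) (Tv 0%nat)),
      (inner_sym n (Tv 2%nat) (Tv 1%nat)). ring. }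
  pose proof (unit_bound n _ _ U0 U1) as Ba.
  pose proof (unit_bound n _ _ U1 U2) as Bb.
  pose proof (unit_bound n _ _ U0 U2) as Bc.
  set (a := inner n (Tv 0%nat) (Tv 1%nat)) in *.
  set (b := inner n (Tv 1%nat) (Tv 2%nat)) in *.
  set (c := inner n (Tv 0%nat) (Tv 2%nat)) in *.
  assert (Pabc : a * b * c <= 1).
  { assert (Hab : -1 <= a * b <= 1) by (split; nra). nra. }
  split; [exact Edet|]. split; [rewrite Edet; nra|]. split; [lra|]. split.
  - split.
    + intros H0.
      assert (abc1 : a * b * c = 1) by nra.
      assert (sq : a^2 + b^2 + c^2 = 3) by nra.
      assert (a2 : a * a = 1) by nra. assert (b2 : b * b = 1) by nra. assert (c2 : c * c = 1) by nra.
      assert (Ha : a = 1 \/ a = -1) by (destruct (Rle_lt_dec 0 a); [left|right]; nra).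
      assert (Hb : b = 1 \/ b = -1) by (destruct (Rle_lt_dec 0 b); [left|right]; nra).
      assert (Hc : c = 1 \/ c = -1) by (destruct (Rle_lt_dec 0 c); [left|right]; nra).
      destruct Ha as [Ha|Ha]; destruct Hb as [Hb|Hb]; destruct Hc as [Hc|Hc];
        rewrite ?Ha, ?Hb, ?Hc in abc1; try lra.
      * left. split; apply unit_eq1; auto.
      * right. exists 0%nat. simpl. split; [lia|]. split.
        -- apply unit_eq1; auto.
        -- apply unit_eqm1; auto.
      * right. exists 1%nat. simpl. split; [lia|]. split.
        -- apply unit_eq1; auto.
        -- apply unit_eqm1; auto. rewrite inner_sym; exact Ha.
      * right. exists 2%nat. simpl. split; [lia|]. split.
        -- intros k Hk. symmetry. apply (unit_eq1 n _ _ U0 U2 Hc); auto.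
        -- apply unit_eqm1; auto. rewrite inner_sym. exact Hb.
    + intros H. rewrite Edet.
      destruct H as [[H01 H12]|[i [Hi [E1 E2]]]].
      * assert (a = 1) by (unfold a; rewrite <- (inner_veq_r _ _ _ _ H01); auto).
        assert (b = 1) by (unfold b; rewrite <- (inner_veq_r _ _ _ _ H12); auto).
        assert (c = 1).
        { unfold c. rewrite <- (inner_veq_r _ _ _ _ H12), <- (inner_veq_r _ _ _ _ H01); auto. }
        subst a b c. rewrite H, H0, H1. ring.
      * destruct i as [|[|[|i]]]; try lia; simpl in E1, E2.
        -- assert (a = 1) by (unfold a; rewrite <- (inner_veq_r _ _ _ _ E1); auto).
           assert (c = -1) by (unfold c; rewrite (inner_veq_r _ _ _ _ E2), inner_neg_r; lra).
           assert (b = -1).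
           { unfold b. rewrite (inner_veq_r _ _ _ _ E2), inner_neg_r, <- (inner_veq_l _ _ _ _ E1). lra. }
           subst a b c. rewrite H, H0, H1. ring.
        -- assert (b = 1) by (unfold b; rewrite <- (inner_veq_r _ _ _ _ E1); auto).
           assert (a = -1) by (unfold a; rewrite (inner_veq_l _ _ _ _ E2), inner_sym, inner_neg_r; lra).
           assert (c = -1).
           { unfold c. rewrite (inner_veq_l _ _ _ _ E2), inner_sym, inner_neg_r, <- (inner_veq_l _ _ _ _ E1). lra. }
           subst a b c. rewrite H, H0, H1. ring.
        -- assert (c = 1) by (unfold c; rewrite (inner_veq_r _ _ _ _ E1); auto).
           assert (b = -1) by (unfold b; rewrite (inner_veq_l _ _ _ _ E2), inner_sym, inner_neg_r; lra).
           assert (a = -1).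
           { unfold a. rewrite (inner_veq_r _ _ _ _ E2), inner_neg_r, (inner_veq_r _ _ _ _ E1). lra. }
           subst a b c. rewrite H, H0, H1. ring.
  - intros Hspan v Hv.
    set (Q := sumR 3 (fun i => sumR 3 (fun j => v i * Mmat n Tv i j * v j))).
    set (D := fun k => (v 0%nat * Tv 0%nat k - v 1%nat * Tv 1%nat k)^2
                 + (v 1%nat * Tv 1%nat k - v 2%nat * Tv 2%nat k)^2
                 + (v 0%nat * Tv 0%nat k - v 2%nat * Tv 2%nat k)^2).
    assert (EQ : Q = sumR n D).
    { unfold Q, D, Mmat. simpl.
      transitivity (sumR n (fun k =>
         (v 0%nat * v 0%nat * 2) * (Tv 0%nat k * Tv 0%nat k)
       + (v 1%nat * v 1%nat * 2) * (Tv 1%nat k * Tv 1%nat k)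
       + (v 2%nat * v 2%nat * 2) * (Tv 2%nat k * Tv 2%nat k)
       + (- 2 * v 0%nat * v 1%nat) * (Tv 0%nat k * Tv 1%nat k)
       + (- 2 * v 1%nat * v 2%nat) * (Tv 1%nat k * Tv 2%nat k)
       + (- 2 * v 0%nat * v 2%nat) * (Tv 0%nat k * Tv 2%nat k))).
      - rewrite sumR_lin6. fold (inner n (Tv 0%nat) (Tv 0%nat)) (inner n (Tv 1%nat) (Tv 1%nat))
          (inner n (Tv 2%nat) (Tv 2%nat)) (inner n (Tv 0%nat) (Tv 1%nat))
          (inner n (Tv 1%nat) (Tv 2%nat)) (inner n (Tv 0%nat) (Tv 2%nat)).
        rewrite U0, U1, U2.
        rewrite (inner_sym n (Tv 1%nat) (Tv 0%nat)), (inner_sym n (Tv 2%nat) (Tv 0%nat)),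
          (inner_sym n (Tv 2%nat) (Tv 1%nat)). fold a b c. ring.
      - apply sumR_ext. intros; ring. }
    assert (Dnn : forall k, (k < n)%nat -> 0 <= D k) by (intros; unfold D; repeat apply Rplus_le_le_0_compat; apply pow2_ge_0).
    assert (Q0 : 0 <= Q) by (rewrite EQ; apply sumR_nonneg; auto).
    fold Q. destruct (Rle_lt_or_eq_dec _ _ Q0) as [|Qz]; auto. exfalso.
    assert (Z : forall k, (k < n)%nat -> D k = 0) by (apply sumR_zero; auto; lra).
    assert (Z01 : forall k, (k < n)%nat -> v 0%nat * Tv 0%nat k = v 1%nat * Tv 1%nat k).
    { intros k Hk. specialize (Z k Hk). unfold D in Z. apply sq3_zero in Z. lra. }
    assert (Z12 : forall k, (k < n)%nat -> v 1%nat * Tv 1%nat k = v 2%nat * Tv 2%nat k).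
    { intros k Hk. specialize (Z k Hk). unfold D in Z. apply sq3_zero in Z. lra. }
    assert (N0 : v 0%nat <> 0).
    { intros E. destruct Hv as [|[|]]; [lra| |].
      - apply (nonzero_unit n (v 1%nat) (Tv 1%nat)); auto. intros k Hk. rewrite <- Z01 by auto. rewrite E; ring.
      - apply (nonzero_unit n (v 2%nat) (Tv 2%nat)); auto. intros k Hk. rewrite <- Z12, <- Z01 by auto. rewrite E; ring. }
    assert (N1 : v 1%nat <> 0).
    { intros E. apply (nonzero_unit n (v 0%nat) (Tv 0%nat)); auto. intros k Hk. rewrite Z01 by auto. rewrite E; ring. }
    assert (N2 : v 2%nat <> 0).
    { intros E. apply (nonzero_unit n (v 0%nat) (Tv 0%nat)); auto. intros k Hk. rewrite Z01, Z12 by auto. rewrite E; ring. }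
    apply (span_collinear n Tv (fun k => v 0%nat * Tv 0%nat k) (fun j => / v j)); auto.
    intros j k Hj Hk. destruct j as [|[|[|j]]]; try lia.
    + field. auto.
    + rewrite Z01 by auto. field. auto.
    + rewrite Z01, Z12 by auto. field. auto.
Qed.

Lemma deriv_loc_eq (g1 g2 : R -> R) t a b l1 l2 : a < t < b ->
  (forall s, a < s < b -> g1 s = g2 s) ->
  derivable_pt_lim g1 t l1 -> derivable_pt_lim g2 t l2 -> l1 = l2.
Proof. intros Ht Heq D1 D2. apply (uniqueness_limite g2 t); auto.
  intros eps Heps. destruct (D1 eps Heps) as [d Hd].
  assert (Hp : 0 < Rmin d (Rmin (t - a) (b - t))).
  { destruct d; simpl. repeat apply Rmin_pos; lra. }
  exists (mkposreal _ Hp). intros h Hh Hlt. simpl in Hlt.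
  pose proof (Rmin_l d (Rmin (t-a) (b-t))). pose proof (Rmin_r d (Rmin (t-a) (b-t))).
  pose proof (Rmin_l (t-a) (b-t)). pose proof (Rmin_r (t-a) (b-t)).
  assert (Hh1 : Rabs h < d) by lra.
  assert (Hh2 : a < t + h < b) by (split_Rabs; lra).
  rewrite <- (Heq (t+h)) by exact Hh2. rewrite <- (Heq t) by exact Ht. apply Hd; auto. Qed.

Lemma dt_deriv T g t : smooth_on T g -> 0 < t < T ->
  derivable_pt_lim (fun s => g s 0) t (dt g t 0).
Proof. intros H Ht. destruct (H nil) as [_ H2]. destruct (H2 t 0 Ht) as [H3 _].
  unfold Iset; lra. exact H3. Qed.

Lemma forward T g1 g2 : smooth_on T g1 -> smooth_on T g2 ->
  (forall s, 0 < s < T -> g1 s 0 = g2 s 0) -> forall t, 0 < t < T -> dt g1 t 0 = dt g2 t 0.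
Proof. intros S1 S2 E t Ht. apply (deriv_loc_eq (fun s => g1 s 0) (fun s => g2 s 0) t 0 T); auto; apply (dt_deriv T); auto. Qed.

Lemma backward T g1 g2 : 0 < T -> smooth_on T g1 -> smooth_on T g2 ->
  cont_on (fun t x => 0 <= t < T /\ Iset x) g1 ->
  cont_on (fun t x => 0 <= t < T /\ Iset x) g2 ->
  g1 0 0 = g2 0 0 -> (forall t, 0 < t < T -> dt g1 t 0 = dt g2 t 0) ->
  forall t, 0 < t < T -> g1 t 0 = g2 t 0.
Proof. intros HT S1 S2 C1 C2 E0 Ed.
  set (h := fun s => g1 s 0 - g2 s 0).
  assert (Hc : forall t1 t2, 0 < t1 < T -> 0 < t2 < T -> t1 < t2 -> h t1 = h t2).
  { intros t1 t2 H1 H2 H12.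
    destruct (MVT_cor2 h (fun s => dt g1 s 0 - dt g2 s 0) t1 t2 H12) as [c [Hc1 Hc2]].
    - intros c Hc. apply derivable_pt_lim_minus; apply (dt_deriv T); auto; lra.
    - rewrite Ed in Hc1 by lra. lra. }
  assert (Hc' : forall t1 t2, 0 < t1 < T -> 0 < t2 < T -> h t1 = h t2).
  { intros t1 t2 H1 H2. destruct (Rtotal_order t1 t2) as [|[|]]; subst; auto.
    symmetry; auto. }
  intros t Ht. destruct (Req_dec (h t) 0) as [Z|NZ]. unfold h in Z; lra. exfalso.
  assert (He : Rabs (h t) / 2 > 0) by (pose proof (Rabs_pos_lt _ NZ); lra).
  assert (I0 : 0 <= 0 < T /\ Iset 0) by (unfold Iset; lra).
  destruct (C1 0 0 I0 _ He) as [d1 [Hd1 P1]].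
  destruct (C2 0 0 I0 _ He) as [d2 [Hd2 P2]].
  set (t' := Rmin t (Rmin d1 d2) / 2).
  assert (Hm : 0 < Rmin t (Rmin d1 d2)) by (repeat apply Rmin_pos; lra).
  pose proof (Rmin_l t (Rmin d1 d2)). pose proof (Rmin_r t (Rmin d1 d2)).
  pose proof (Rmin_l d1 d2). pose proof (Rmin_r d1 d2).
  assert (Ht' : 0 < t' < T) by (unfold t'; lra).
  assert (I' : 0 <= t' < T /\ Iset 0) by (unfold Iset; lra).
  assert (A0 : Rabs (0 - 0) < d1) by (rewrite Rminus_0_r, Rabs_R0; lra).
  assert (A0' : Rabs (0 - 0) < d2) by (rewrite Rminus_0_r, Rabs_R0; lra).
  assert (At1 : Rabs (t' - 0) < d1) by (rewrite Rminus_0_r, Rabs_right; unfold t'; lra).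
  assert (At2 : Rabs (t' - 0) < d2) by (rewrite Rminus_0_r, Rabs_right; unfold t'; lra).
  specialize (P1 t' 0 I' At1 A0). specialize (P2 t' 0 I' At2 A0').
  pose proof (Hc' t' t Ht' Ht). unfold h in *.
  split_Rabs; lra. Qed.

Lemma inner_decomp n V A Tj Ti p : (forall k, (k < n)%nat -> V k = - A k + p * Tj k) ->
  inner n V Ti = - inner n A Ti + p * inner n Tj Ti.
Proof. intros H. unfold inner.
  transitivity (sumR n (fun k => (-1) * (A k * Ti k) + p * (Tj k * Ti k) + 0 * 0)).
  - apply sumR_ext. intros k Hk. rewrite H by auto. ring.
  - rewrite sumR_lin3. ring. Qed.

Lemma tangent_unit n f t x : 0 < speed n f t x -> inner n (tangent n f t x) (tangent n f t x) = 1.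
Proof. intros Hs. unfold tangent, dsv.
  set (s := speed n f t x) in *.
  assert (Hss : s * s = inner n (dxv f t x) (dxv f t x)).
  { unfold s, speed. apply sqrt_sqrt.
    destruct (Rle_lt_dec 0 (inner n (dxv f t x) (dxv f t x))); auto.
    unfold s, speed in Hs. rewrite sqrt_neg_0 in Hs; lra. }
  unfold inner.
  transitivity (sumR n (fun k => / (s * s) * (dxv f t x k * dxv f t x k) + 0 * 0 + 0 * 0)).
  - apply sumR_ext. intros k Hk. unfold dxv. field. lra.
  - rewrite sumR_lin3. fold (inner n (dxv f t x) (dxv f t x)). rewrite <- Hss. field. lra. Qed.

Lemma nablas_normal n f Y t x : 0 < speed n f t x ->
  inner n (nablas n f Y t x) (tangent n f t x) = 0.
Proof. intros Hs. pose proof (tangent_unit n f t x Hs) as U.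
  unfold nablas at 1. unfold inner at 1.
  set (D := dsv n f Y t x). set (Tg := tangent n f t x).
  transitivity (sumR n (fun k => 1 * (D k * Tg k) + (- inner n D Tg) * (Tg k * Tg k) + 0 * 0)).
  - apply sumR_ext. intros k Hk. ring.
  - rewrite sumR_lin3. fold (inner n D Tg) (inner n Tg Tg). unfold Tg. rewrite U. ring. Qed.

Lemma part1 : (forall (n : nat) (T : R) (f : nat -> R -> R -> vec) (lambda : nat -> R)
          (phi : nat -> R -> R -> R),
     0 < T ->
     (forall i k, (i < 3)%nat -> (k < n)%nat -> smooth_on T (vcomp (f i) k)) ->
     (forall i k, (i < 3)%nat -> (k < n)%nat ->
        cont_on (fun t x => 0 <= t < T /\ Iset x) (vcomp (f i) k)) ->
     (forall i, (i < 3)%nat -> smooth_on T (phi i)) ->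
     (forall i t x, (i < 3)%nat -> 0 < t < T -> Iset x -> 0 < speed n (f i) t x) ->
     (forall i t x k, (i < 3)%nat -> 0 < t < T -> Iset x -> (k < n)%nat ->
        dtv (f i) t x k =
          - nablas n (f i) (nablas n (f i) (kappa n (f i))) t x k
          - / 2 * inner n (kappa n (f i) t x) (kappa n (f i) t x) * kappa n (f i) t x k
          + lambda i * kappa n (f i) t x k
          + phi i t x * tangent n (f i) t x k) ->
     (forall i t k, (i < 3)%nat -> 0 < t < T -> (k < n)%nat -> kappa n (f i) t 0 k = 0) ->
     veq n (f 0%nat 0 0) (f 1%nat 0 0) -> veq n (f 1%nat 0 0) (f 2%nat 0 0) ->
     ((forall t, 0 < t < T ->
         veq n (f 0%nat t 0) (f 1%nat t 0) /\ veq n (f 1%nat t 0) (f 2%nat t 0)) <->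
      (forall t, 0 < t < T -> forall i j, (i < 3)%nat -> (j < 3)%nat ->
         veq n (dtv (f i) t 0) (dtv (f j) t 0))) /\
     ((forall t, 0 < t < T ->
         veq n (f 0%nat t 0) (f 1%nat t 0) /\ veq n (f 1%nat t 0) (f 2%nat t 0)) ->
      forall t, 0 < t < T -> forall i, (i < 3)%nat ->
        sumR 3 (fun j => Mmat n (fun l => tangent n (f l) t 0) i j * phi j t 0) =
        - (inner n (nablas n (f ((i + 1) mod 3)%nat)
                      (nablas n (f ((i + 1) mod 3)%nat) (kappa n (f ((i + 1) mod 3)%nat))) t 0)
                   (tangent n (f i) t 0)
           + inner n (nablas n (f ((i + 2) mod 3)%nat)
                      (nablas n (f ((i + 2) mod 3)%nat) (kappa n (f ((i + 2) mod 3)%nat))) t 0)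
                   (tangent n (f i) t 0)))).
Proof.
  intros n T f lambda phi HT Sm Cn Sphi Hsp Hpde Hk0 E01 E12.
  assert (Fw : (forall t, 0 < t < T ->
         veq n (f 0%nat t 0) (f 1%nat t 0) /\ veq n (f 1%nat t 0) (f 2%nat t 0)) ->
      (forall t, 0 < t < T -> forall i, (i < 3)%nat ->
         veq n (dtv (f i) t 0) (dtv (f 0%nat) t 0))).
  { intros H t Ht i Hi k Hk. unfold dtv.
    apply (forward T); auto. intros s Hs. unfold vcomp.
    destruct (H s Hs) as [H1 H2].
    destruct i as [|[|[|i]]]; try lia.
    - auto.
    - symmetry; auto.
    - rewrite <- H2, <- H1 by auto; auto. }
  split; [split|].
  - intros H t Ht i j Hi Hj k Hk. rewrite (Fw H t Ht i Hi k Hk), (Fw H t Ht j Hj k Hk). auto.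
  - intros H t Ht. split.
    + intros k Hk. apply (backward T (vcomp (f 0%nat) k) (vcomp (f 1%nat) k)); auto.
      apply E01; auto. intros s Hs. apply (H s Hs 0%nat 1%nat); auto.
    + intros k Hk. apply (backward T (vcomp (f 1%nat) k) (vcomp (f 2%nat) k)); auto.
      apply E12; auto. intros s Hs. apply (H s Hs 1%nat 2%nat); auto.
  - intros H t Ht i Hi.
    assert (I0 : Iset 0) by (unfold Iset; lra).
    set (V := dtv (f 0%nat) t 0).
    set (A := fun j => nablas n (f j) (nablas n (f j) (kappa n (f j))) t 0).
    set (Tg := fun j => tangent n (f j) t 0).
    assert (HV : forall j, (j < 3)%nat -> forall k, (k < n)%nat ->
       V k = - A j k + phi j t 0 * Tg j k).
    { intros j Hj k Hk. unfold V. rewrite <- (Fw H t Ht j Hj k Hk).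
      rewrite Hpde by auto. rewrite Hk0 by auto. unfold A, Tg. ring. }
    assert (Dec : forall j l, (j < 3)%nat ->
       inner n V (Tg l) = - inner n (A j) (Tg l) + phi j t 0 * inner n (Tg j) (Tg l)).
    { intros j l Hj. apply inner_decomp. auto. }
    assert (Un : forall j, (j < 3)%nat -> inner n (Tg j) (Tg j) = 1).
    { intros j Hj. apply tangent_unit. auto. }
    assert (Nm : forall j, (j < 3)%nat -> inner n (A j) (Tg j) = 0).
    { intros j Hj. apply nablas_normal. auto. }
    pose proof (Dec 0%nat 0%nat ltac:(lia)) as D00.
    pose proof (Dec 1%nat 0%nat ltac:(lia)) as D10.
    pose proof (Dec 2%nat 0%nat ltac:(lia)) as D20.
    pose proof (Dec 0%nat 1%nat ltac:(lia)) as D01.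
    pose proof (Dec 1%nat 1%nat ltac:(lia)) as D11.
    pose proof (Dec 2%nat 1%nat ltac:(lia)) as D21.
    pose proof (Dec 0%nat 2%nat ltac:(lia)) as D02.
    pose proof (Dec 1%nat 2%nat ltac:(lia)) as D12.
    pose proof (Dec 2%nat 2%nat ltac:(lia)) as D22.
    rewrite (Un 0%nat), (Nm 0%nat) in D00 by lia.
    rewrite (Un 1%nat), (Nm 1%nat) in D11 by lia.
    rewrite (Un 2%nat), (Nm 2%nat) in D22 by lia.
    destruct i as [|[|[|i]]]; try lia; unfold Mmat; simpl; fold (Tg 0%nat) (Tg 1%nat) (Tg 2%nat);
      fold (A 0%nat) (A 1%nat) (A 2%nat);
      rewrite ?(inner_sym n (Tg 1%nat) (Tg 0%nat)), ?(inner_sym n (Tg 2%nat) (Tg 0%nat)),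
        ?(inner_sym n (Tg 2%nat) (Tg 1%nat)) in *; lra.
Qed.
(* Curves are indexed 0,1,2 (paper: 1,2,3). *)
Theorem mainTheorem10 :
  (forall (n : nat) (T : R) (f : nat -> R -> R -> vec) (lambda : nat -> R)
          (phi : nat -> R -> R -> R),
     0 < T ->
     (forall i k, (i < 3)%nat -> (k < n)%nat -> smooth_on T (vcomp (f i) k)) ->
     (forall i k, (i < 3)%nat -> (k < n)%nat ->
        cont_on (fun t x => 0 <= t < T /\ Iset x) (vcomp (f i) k)) ->
     (forall i, (i < 3)%nat -> smooth_on T (phi i)) ->
     (forall i t x, (i < 3)%nat -> 0 < t < T -> Iset x -> 0 < speed n (f i) t x) ->
     (forall i t x k, (i < 3)%nat -> 0 < t < T -> Iset x -> (k < n)%nat ->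
        dtv (f i) t x k =
          - nablas n (f i) (nablas n (f i) (kappa n (f i))) t x k
          - / 2 * inner n (kappa n (f i) t x) (kappa n (f i) t x) * kappa n (f i) t x k
          + lambda i * kappa n (f i) t x k
          + phi i t x * tangent n (f i) t x k) ->
     (forall i t k, (i < 3)%nat -> 0 < t < T -> (k < n)%nat -> kappa n (f i) t 0 k = 0) ->
     veq n (f 0%nat 0 0) (f 1%nat 0 0) -> veq n (f 1%nat 0 0) (f 2%nat 0 0) ->
     ((forall t, 0 < t < T ->
         veq n (f 0%nat t 0) (f 1%nat t 0) /\ veq n (f 1%nat t 0) (f 2%nat t 0)) <->
      (forall t, 0 < t < T -> forall i j, (i < 3)%nat -> (j < 3)%nat ->
         veq n (dtv (f i) t 0) (dtv (f j) t 0))) /\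
     ((forall t, 0 < t < T ->
         veq n (f 0%nat t 0) (f 1%nat t 0) /\ veq n (f 1%nat t 0) (f 2%nat t 0)) ->
      forall t, 0 < t < T -> forall i, (i < 3)%nat ->
        sumR 3 (fun j => Mmat n (fun l => tangent n (f l) t 0) i j * phi j t 0) =
        - (inner n (nablas n (f ((i + 1) mod 3)%nat)
                      (nablas n (f ((i + 1) mod 3)%nat) (kappa n (f ((i + 1) mod 3)%nat))) t 0)
                   (tangent n (f i) t 0)
           + inner n (nablas n (f ((i + 2) mod 3)%nat)
                      (nablas n (f ((i + 2) mod 3)%nat) (kappa n (f ((i + 2) mod 3)%nat))) t 0)
                   (tangent n (f i) t 0))))
  /\
  (forall (n : nat) (Tv : nat -> vec),
     (forall i, (i < 3)%nat -> inner n (Tv i) (Tv i) = 1) ->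
     det3 (Mmat n Tv) =
       8 - 2 * ((inner n (Tv 0%nat) (Tv 1%nat)) ^ 2 + (inner n (Tv 1%nat) (Tv 2%nat)) ^ 2
                + (inner n (Tv 0%nat) (Tv 2%nat)) ^ 2)
         - 2 * inner n (Tv 0%nat) (Tv 1%nat) * inner n (Tv 1%nat) (Tv 2%nat)
             * inner n (Tv 0%nat) (Tv 2%nat) /\
     det3 (Mmat n Tv) >=
       2 * (1 - inner n (Tv 0%nat) (Tv 1%nat) * inner n (Tv 1%nat) (Tv 2%nat)
                  * inner n (Tv 0%nat) (Tv 2%nat)) /\
     2 * (1 - inner n (Tv 0%nat) (Tv 1%nat) * inner n (Tv 1%nat) (Tv 2%nat)
                * inner n (Tv 0%nat) (Tv 2%nat)) >= 0 /\
     (det3 (Mmat n Tv) = 0 <->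
        ((veq n (Tv 0%nat) (Tv 1%nat) /\ veq n (Tv 1%nat) (Tv 2%nat)) \/
         exists i, (i < 3)%nat /\ veq n (Tv i) (Tv ((i + 1) mod 3)%nat) /\
                   veq n (Tv ((i + 2) mod 3)%nat) (fun k => - Tv i k))) /\
     (span_dim_ge2 n Tv -> posdef3 (Mmat n Tv))).
Proof. split; [exact part1 | exact part2]. Qed.
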